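(* For every $\beta\in B_n$, every entry of the matrix $\phi(\beta)$ is of the form $a\beta$ for some $a\in\mathbf{Z}[F_n]$.
   Context: The braid group $B_n$ ($n\ge2$) has generators $\sigma_1,\dots,\sigma_{n-1}$ with relations $\sigma_i\sigma_j=\sigma_j\sigma_i$ for $|i-j|>1$ and $\sigma_i\sigma_j\sigma_i=\sigma_j\sigma_i\sigma_j$ for $|i-j|=1$. Let $F_n$ be the free group on $g_1,\dots,g_n$. The semidirect product $F_n\rtimes B_n$ is the group generated by $F_n$ and $B_n$ subject to the additional relations $g_{i+1}\sigma_i=\sigma_i g_i$, $g_i\sigma_i=\sigma_i g_i g_{i+1}g_i^{-1}$, and $g_j\sigma_i=\sigma_i g_j$ for $j\notin\{i,i+1\}$; $\mathbf{Z}[F_n]\subset\mathbf{Z}[F_n\rtimes B_n]$ are the group rings. For $i=1,\dots,n-1$ let $R_i=\begin{bmatrix}0&g_i\\1&1-g_i\end{bmatrix}$. Let $\phi$ be the homomorphism from $B_n$ to the group of invertible $n\times n$ matrices over $\mathbf{Z}[F_n\rtimes B_n]$ (usual matrix multiplication) given by $\phi(\sigma_i)=\sigma_i\cdot\mathrm{diag}(I_{i-1},R_i,I_{n-i-1})$, where the scalar $\sigma_i$ multiplies every entry on the left. *)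

(* Defs.v *)
From HB Require Import structures.
From mathcomp Require Import all_boot all_order all_algebra.
Set Implicit Arguments. Unset Strict Implicit. Unset Printing Implicit Defensive.
Import GRing.Theory.
Local Open Scope ring_scope.

(* Conventions: we work in an arbitrary ring R containing
   elements g_1..g_n (with two-sided inverses ginv_i) and s_1..s_{n-1}
   (images of sigma_i, with two-sided inverses sinv_i) satisfying all the
   defining relations of F_n ⋊ B_n.  The universal such ring is
   Z[F_n ⋊ B_n]; all indices are 1-based as in the paper. *)

Section Defs.
Variable R : nzRingType.
Variable n : nat.
Variables (g ginv s sinv : nat -> R).

Definition semidirect_rels : Prop :=
  (forall i, (1 <= i <= n)%N -> g i * ginv i = 1 /\ ginv i * g i = 1) /\
  (forall i, (1 <= i < n)%N -> s i * sinv i = 1 /\ sinv i * s i = 1) /\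
  (forall i j, (1 <= i < n)%N -> (1 <= j < n)%N -> (i.+1 < j \/ j.+1 < i)%N ->
     s i * s j = s j * s i) /\
  (forall i j, (1 <= i < n)%N -> (1 <= j < n)%N -> (j = i.+1 \/ i = j.+1) ->
     s i * s j * s i = s j * s i * s j) /\
  (forall i, (1 <= i < n)%N ->
     g i.+1 * s i = s i * g i /\ g i * s i = s i * (g i * g i.+1 * ginv i)) /\
  (forall i j, (1 <= i < n)%N -> (1 <= j <= n)%N -> j <> i -> j <> i.+1 ->
     g j * s i = s i * g j).

(* The image of Z[F_n] in R: the subring generated by the g_i^{±1}. *)
Inductive inZF : R -> Prop :=
| inZF0 : inZF 0
| inZF1 : inZF 1
| inZFg i : (1 <= i <= n)%N -> inZF (g i)
| inZFginv i : (1 <= i <= n)%N -> inZF (ginv i)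
| inZFN a : inZF a -> inZF (- a)
| inZFD a b : inZF a -> inZF b -> inZF (a + b)
| inZFM a b : inZF a -> inZF b -> inZF (a * b).

(* phi(sigma_i) = sigma_i . diag(I_{i-1}, R_i, I_{n-i-1}),
   R_i = [[0, g_i], [1, 1 - g_i]]; rows/cols i, i+1 (1-based) are
   the 0-based indices i-1, i. *)
Definition phi_gen (i : nat) : 'M[R]_n :=
  \matrix_(j, k)
    (s i * (let j := nat_of_ord j in let k := nat_of_ord k in
            if (j == i.-1) && (k == i.-1) then 0
            else if (j == i.-1) && (k == i) then g i
            else if (j == i) && (k == i.-1) then 1
            else if (j == i) && (k == i) then 1 - g i
            else (j == k)%:R)).

(* A braid word: letters (i, true) = sigma_i, (i, false) = sigma_i^{-1}. *)
Definition braid_word_ok (w : seq (nat * bool)) : bool :=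
  all (fun l => (1 <= l.1 < n)%N) w.

Definition braid_val (w : seq (nat * bool)) : R :=
  foldr (fun l acc => (if l.2 then s l.1 else sinv l.1) * acc) 1 w.

(* PhiRel w M : M = phi(beta) for beta represented by w, phi being
   multiplicative with phi(sigma_i^{-1}) the (two-sided) inverse of
   phi(sigma_i). *)
Inductive PhiRel : seq (nat * bool) -> 'M[R]_n -> Prop :=
| PhiNil : PhiRel [::] 1%:M
| PhiPos i w M : PhiRel w M -> PhiRel ((i, true) :: w) (phi_gen i *m M)
| PhiNeg i w M N : N *m phi_gen i = 1%:M -> phi_gen i *m N = 1%:M ->
    PhiRel w M -> PhiRel ((i, false) :: w) (N *m M).

End Defs.

Arguments semidirect_rels : clear implicits.
Arguments inZF : clear implicits.
Arguments phi_gen : clear implicits.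
Arguments braid_word_ok : clear implicits.
Arguments braid_val : clear implicits.
Arguments PhiRel : clear implicits.

(* Main.v *)
Require Import Defs.
From HB Require Import structures.
From mathcomp Require Import all_boot all_order all_algebra zify.
Set Implicit Arguments. Unset Strict Implicit.
Import GRing.Theory.
Local Open Scope ring_scope.

Lemma push_s (R : nzRingType) n g ginv s sinv i x :
  semidirect_rels R n g ginv s sinv -> (1 <= i < n)%N -> inZF R n g ginv x ->
  exists y, inZF R n g ginv y /\ s i * x = y * s i.
Proof.
move=> [Hg [Hs [_ [_ [Hgs Hgo]]]]] Hi.
have [Hgs1 Hgs2] := Hgs i Hi.
have Hi1 : (1 <= i <= n)%N by lia.
have Hi2 : (1 <= i.+1 <= n)%N by lia.
have [gi1 gi2] := Hg i Hi1; have [gj1 gj2] := Hg i.+1 Hi2.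
have gen : forall j, (1 <= j <= n)%N -> exists y y',
   [/\ inZF R n g ginv y, inZF R n g ginv y', y' * y = 1 & s i * g j = y * s i].
  move=> j Hj; case: (eqVneq j i) => [->|nji].
    exists (g i.+1), (ginv i.+1); split; [exact: inZFg|exact: inZFginv|done|by rewrite Hgs1].
  case: (eqVneq j i.+1) => [->|nji1].
    exists (ginv i.+1 * g i * g i.+1), (ginv i.+1 * ginv i * g i.+1); split.
    - by apply: inZFM; [apply: inZFM|]; [apply: inZFginv|apply: inZFg|apply: inZFg].
    - by apply: inZFM; [apply: inZFM|]; [apply: inZFginv|apply: inZFginv|apply: inZFg].
    - by rewrite -!mulrA (mulrA (g i.+1)) gj1 mul1r (mulrA (ginv i)) gi2 mul1r gj2.
    - have e3 : forall z, g i.+1 * (s i * (g i.+1 * (ginv i * z))) = g i * (s i * z).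
        by move=> z; rewrite !mulrA Hgs1 -(mulrA (s i) (g i)) -(mulrA (s i)) -Hgs2.
      rewrite -[s i * g i.+1]mul1r -gj2 -[LHS]mulr1 -gi2 -!mulrA e3 -Hgs1.
      by rewrite !mulrA.
  exists (g j), (ginv j); have [h1 h2] := Hg j Hj.
  split; [exact: inZFg|exact: inZFginv|done|].
  by rewrite (Hgo i j Hi Hj) //; apply/eqP.
elim.
- by exists 0; split; [exact: inZF0|rewrite mulr0 mul0r].
- by exists 1; split; [exact: inZF1|rewrite mulr1 mul1r].
- by move=> j Hj; have [y [y' [? ? ? ?]]] := gen j Hj; exists y.
- move=> j Hj; have [y [y' [? ? Hyy Hsg]]] := gen j Hj; exists y'; split => //.
  have [h1 h2] := Hg j Hj.
  by rewrite -[s i * ginv j]mul1r -Hyy -mulrA (mulrA y) -Hsg -mulrA h1 mulr1.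
- by move=> a _ [y [Hy e]]; exists (- y); split; [exact: inZFN|rewrite mulrN e mulNr].
- move=> a b _ [y [Hy e]] _ [z [Hz f]]; exists (y + z); split; first exact: inZFD.
  by rewrite mulrDr e f mulrDl.
- move=> a b _ [y [Hy e]] _ [z [Hz f]]; exists (y * z); split; first exact: inZFM.
  by rewrite mulrA e -mulrA f mulrA.
Qed.
Lemma push_t (R : nzRingType) n g ginv s sinv i x :
  semidirect_rels R n g ginv s sinv -> (1 <= i < n)%N -> inZF R n g ginv x ->
  exists y, inZF R n g ginv y /\ x * s i = s i * y.
Proof.
move=> [Hg [Hs [_ [_ [Hgs Hgo]]]]] Hi.
have [Hgs1 Hgs2] := Hgs i Hi.
have Hi1 : (1 <= i <= n)%N by lia.
have Hi2 : (1 <= i.+1 <= n)%N by lia.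
have [gi1 gi2] := Hg i Hi1; have [gj1 gj2] := Hg i.+1 Hi2.
have gen : forall j, (1 <= j <= n)%N -> exists y y',
   [/\ inZF R n g ginv y, inZF R n g ginv y', y * y' = 1 & g j * s i = s i * y].
  move=> j Hj; case: (eqVneq j i) => [->|nji].
    exists (g i * g i.+1 * ginv i), (g i * ginv i.+1 * ginv i); split.
    - by apply: inZFM; [apply: inZFM|]; [apply: inZFg|apply: inZFg|apply: inZFginv].
    - by apply: inZFM; [apply: inZFM|]; [apply: inZFg|apply: inZFginv|apply: inZFginv].
    - by rewrite -!mulrA (mulrA (ginv i)) gi2 mul1r (mulrA (g i.+1)) gj1 mul1r gi1.
    - exact: Hgs2.
  case: (eqVneq j i.+1) => [->|nji1].
    exists (g i), (ginv i); split; [exact: inZFg|exact: inZFginv|done|done].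
  exists (g j), (ginv j); have [h1 h2] := Hg j Hj.
  split; [exact: inZFg|exact: inZFginv|done|].
  by rewrite (Hgo i j Hi Hj) //; apply/eqP.
elim.
- by exists 0; split; [exact: inZF0|rewrite mulr0 mul0r].
- by exists 1; split; [exact: inZF1|rewrite mulr1 mul1r].
- by move=> j Hj; have [y [y' [? ? ? ?]]] := gen j Hj; exists y.
- move=> j Hj; have [y [y' [? ? Hyy Hsg]]] := gen j Hj; exists y'; split => //.
  have [h1 h2] := Hg j Hj.
  rewrite -[ginv j * s i]mulr1 -Hyy mulrA -(mulrA (ginv j) (s i) y) -Hsg.
  by rewrite (mulrA (ginv j)) h2 mul1r.
- by move=> a _ [y [Hy e]]; exists (- y); split; [exact: inZFN|rewrite mulNr e mulrN].
- move=> a b _ [y [Hy e]] _ [z [Hz f]]; exists (y + z); split; first exact: inZFD.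
  by rewrite mulrDl e f mulrDr.
- move=> a b _ [y [Hy e]] _ [z [Hz f]]; exists (y * z); split; first exact: inZFM.
  by rewrite -mulrA f mulrA e mulrA.
Qed.

Lemma push_sinv (R : nzRingType) n g ginv s sinv i x :
  semidirect_rels R n g ginv s sinv -> (1 <= i < n)%N -> inZF R n g ginv x ->
  exists y, inZF R n g ginv y /\ sinv i * x = y * sinv i.
Proof.
move=> H Hi Hx; have [y [Hy e]] := push_t H Hi Hx.
have [h1 h2] := (let: conj _ (conj hs _) := H in hs) i Hi.
exists y; split => //.
by rewrite -[sinv i * x]mulr1 -h1 mulrA -(mulrA (sinv i)) e mulrA h2 mul1r.
Qed.
Definition Dn (R : nzRingType) (g : nat -> R) (i j k : nat) : R :=
  if (j == i.-1) && (k == i.-1) then 0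
  else if (j == i.-1) && (k == i) then g i
  else if (j == i) && (k == i.-1) then 1
  else if (j == i) && (k == i) then 1 - g i
  else (j == k)%:R.

Lemma phiE (R : nzRingType) n g s i (j k : 'I_n) :
  phi_gen R n g s i j k = s i * Dn g i j k.
Proof. by rewrite mxE. Qed.

Lemma colsum (R : nzRingType) n (g : nat -> R) i (r : 'I_n -> R) (ia ib k : 'I_n) :
  (1 <= i)%N -> nat_of_ord ia = i.-1 -> nat_of_ord ib = i ->
  \sum_l r l * Dn g i l k = r ia * Dn g i ia k + r ib * Dn g i ib k
     + (if (k != ia) && (k != ib) then r k else 0).
Proof.
move=> i1 Ha Hb.
have nab : ib != ia by apply/eqP => /(congr1 val) /=; rewrite Ha Hb; lia.
rewrite (bigD1 ia) // (bigD1 ib) //= addrA; congr (_ + _).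

rewrite (eq_bigr (fun l => r l * (l == k)%:R)); last first.
  move=> l /andP[la lb].
  have la' : (nat_of_ord l == i.-1) = false by apply/negbTE; rewrite -Ha.
  have lb' : (nat_of_ord l == i) = false by apply/negbTE; rewrite -Hb.
  by rewrite /Dn la' lb'.
case: ifP => [/andP[ka kb]|kab].
  rewrite (bigD1 k) /=; last by rewrite ka kb.
  rewrite eqxx mulr1 big1 ?addr0 // => l /andP[_ lk].
  by rewrite (negbTE lk) mulr0.
rewrite big1 // => l /andP[la lb].
case: (eqVneq l k) => [lk|]; last by rewrite mulr0.
by move: kab; rewrite -lk la lb.
Qed.
Lemma ZF_sum (R : nzRingType) n g ginv (I : Type) (r : seq I) (P : pred I) (F : I -> R) :
  (forall i, P i -> inZF R n g ginv (F i)) -> inZF R n g ginv (\sum_(i <- r | P i) F i).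
Proof. move=> H; apply: big_ind => //; [exact: inZF0 | exact: inZFD]. Qed.

Lemma ZF_nat (R : nzRingType) n g ginv (b : bool) : inZF R n g ginv (b%:R).
Proof. case: b; [rewrite mulr1n; exact: inZF1|rewrite mulr0n; exact: inZF0]. Qed.

Lemma sum_ex (R : nzRingType) n g ginv (I : Type) (r : seq I) (P : pred I) (F : I -> R) c :
  (forall i, P i -> exists a, inZF R n g ginv a /\ F i = a * c) ->
  exists a, inZF R n g ginv a /\ \sum_(i <- r | P i) F i = a * c.
Proof.
move=> H; apply: (big_ind (fun x => exists a, inZF R n g ginv a /\ x = a * c)) => //.
- by exists 0; split; [exact: inZF0|rewrite mul0r].
- move=> x y [a [Ha ->]] [b [Hb ->]]; exists (a + b); split; first exact: inZFD.
  by rewrite mulrDl.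
Qed.

Lemma Dn_ZF (R : nzRingType) n g ginv i j k :
  (1 <= i <= n)%N -> inZF R n g ginv (Dn g i j k).
Proof.
move=> Hi; rewrite /Dn.
case: ifP => _; first exact: inZF0.
case: ifP => _; first exact: inZFg.
case: ifP => _; first exact: inZF1.
case: ifP => _; last exact: ZF_nat.
by apply: inZFD; [exact: inZF1|apply: inZFN; exact: inZFg].
Qed.

Lemma Dn_vals (R : nzRingType) (g : nat -> R) i : (1 <= i)%N ->
  [/\ Dn g i i.-1 i.-1 = 0, Dn g i i i.-1 = 1, Dn g i i.-1 i = g i,
      Dn g i i i = 1 - g i &
      forall k, k != i.-1 -> k != i -> Dn g i i.-1 k = 0 /\ Dn g i i k = 0].
Proof.
move=> i1.
have ne : (i == i.-1) = false by apply/negbTE; lia.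
have ne' : (i.-1 == i) = false by apply/negbTE; lia.
rewrite /Dn !eqxx ne ne' /=; split => // k k1 k2.
by rewrite (negbTE k1) (negbTE k2) /= eq_sym (negbTE k1) eq_sym (negbTE k2).
Qed.

Theorem lemma3p2 (R : nzRingType) (n : nat) (g ginv s sinv : nat -> R) :
  (2 <= n)%N ->
  semidirect_rels R n g ginv s sinv ->
  forall (w : seq (nat * bool)) (M : 'M[R]_n),
    braid_word_ok n w ->
    PhiRel R n g s w M ->
    forall j k : 'I_n,
      exists a : R, inZF R n g ginv a /\ M j k = a * braid_val R s sinv w.
Proof.
move=> n2 H w M ok HP; elim: HP ok => {w M}.
- move=> _ j k; exists ((j == k)%:R); split; first exact: ZF_nat.
  by rewrite mxE /= mulr1.
- move=> i w M' HP IH /andP[Hi ok] j k; have IH' := IH ok.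
  have Hi1 : (1 <= i <= n)%N by move: Hi => /= ; lia.
  have Hi' : (1 <= i < n)%N by exact: Hi.
  rewrite /= mxE.
  apply: sum_ex => l _.
  have [a [Ha ->]] := IH' l k.
  have hD : inZF R n g ginv (Dn g i j l) by exact: Dn_ZF.
  have [y [Hy e]] := push_s H Hi' (inZFM hD Ha).
  exists y; split => //.
  by rewrite phiE -mulrA (mulrA (Dn g i j l)) (mulrA (s i)) e -!mulrA.
- move=> i w M' N HNp HpN HP IH /andP[Hi ok] j k; have IH' := IH ok.
  have Hi' : (1 <= i < n)%N by exact: Hi.
  have Hi1 : (1 <= i <= n)%N by move: Hi' ; lia.
  have i1 : (1 <= i)%N by move: Hi'; lia.
  have [Hg [Hs _]] := H.
  have [si1 si2] := Hs i Hi'.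
  have [gi1 gi2] := Hg i Hi1.
  have E : forall k' : 'I_n, \sum_l (N j l * s i) * Dn g i l k' = (j == k')%:R.
    move=> k'; have := congr1 (fun A : 'M[R]_n => A j k') HNp; rewrite /= !mxE => <-.
    by apply: eq_bigr => l _; rewrite phiE mulrA.
  have ia_lt : (i.-1 < n)%N by move: Hi'; lia.
  have ib_lt : (i < n)%N by move: Hi'; lia.
  pose ia := Ordinal ia_lt; pose ib := Ordinal ib_lt.
  have CS := fun k' => @colsum R n g i (fun l => N j l * s i) ia ib k' i1 erefl erefl.
  have [d1 d2 d3 d4 d5] := Dn_vals g i1.
  have nab : (ia != ib) by apply/eqP => /(congr1 val) /=; lia.
  have Rb : inZF R n g ginv (N j ib * s i).
    have := E ia; rewrite CS /= d1 d2 eqxx /= mulr0 mulr1 add0r addr0 => ->.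
    exact: ZF_nat.
  have Rl : forall l, inZF R n g ginv (N j l * s i).
    move=> l; case: (eqVneq l ib) => [->|lb] //.
    case: (eqVneq l ia) => [->|la].
      have := E ib; rewrite CS /= d3 d4 eqxx /= andbF addr0 => e.
      have -> : N j ia * s i = ((j == ib)%:R - N j ib * s i * (1 - g i)) * ginv i.
        by rewrite -e addrK -(mulrA _ (g i)) gi1 mulr1.
      apply: inZFM; last exact: inZFginv.
      apply: inZFD; first exact: ZF_nat.
      apply: inZFN; apply: inZFM => //.
      by apply: inZFD; [exact: inZF1|apply: inZFN; exact: inZFg].
    have la' : nat_of_ord l != i.-1 by [].
    have lb' : nat_of_ord l != i by [].
    have [e1 e2] := d5 _ la' lb'.
    have := E l; rewrite CS /= e1 e2 la lb /= !mulr0 !add0r => ->.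
    exact: ZF_nat.
  rewrite /= mxE; apply: sum_ex => l _.
  have [a [Ha ->]] := IH' l k.
  have [y [Hy e]] := push_sinv H Hi' Ha.
  exists (N j l * s i * y); split; first exact: inZFM.
  by rewrite -!mulrA (mulrA y) -e !mulrA -(mulrA _ (s i) (sinv i)) si1 mulr1.
Qed.
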